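(* Let $G$ be a Parametric Timed Game, $R\subseteq L$ a reachability objective, and $W(R)$ the set of winning states of $G$ for $R$. Then $$\mathit{SafePred}\big(W(R)\cup\mathit{WinningMoves}(W(R)),\ \mathit{Uncontrollable}(W(R))\big)\subseteq W(R).$$
   Context: A Parametric Timed Game (PTG) is a tuple $G=(L,X,P,\mathit{Act},T_c,T_u,\ell_0,\mathit{Inv})$ where $L$ is a finite set of locations, $X$ a finite set of clocks, $P$ a finite set of parameters, $\mathit{Act}$ a set of labels, $\ell_0\in L$ the initial location, $T=T_c\cup T_u$ (disjoint union of controllable and uncontrollable transitions) is a finite set of tuples $(\ell,g,a,Y,\ell')$ with $\ell,\ell'\in L$, $a\in\mathit{Act}$, $Y\subseteq X$ and $g$ a guard, and $\mathit{Inv}$ maps each location to a guard. A linear term over $P$ is an expression $k_0+\sum_i k_i p_i$ with $k_i\in\mathbb{Q}$, $p_i\in P$. A guard is a finite conjunction of constraints $x\sim \mathit{plt}$ and $\mathit{plt}'\sim\mathit{plt}$ with $x\in X$, $\sim\in\{<,\le,=,\ge,>\}$, and $\mathit{plt},\mathit{plt}'$ linear terms over $P$. A valuation is a pair $v=(v_X,v_P)$ with $v_X:X\to\mathbb{R}_{\ge0}$ and $v_P:P\to\mathbb{Q}_{\ge0}$; satisfaction $v\models g$ is defined by substituting values. For $\delta\ge0$, $v+\delta=(v_X+\delta,v_P)$ (all clocks increased by $\delta$), and $v[Y:=0]$ sets clocks in $Y$ to $0$ and leaves other clocks and the parameters unchanged. A state is a pair $(\ell,v)$ with $v\models\mathit{Inv}(\ell)$;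 $\mathbb{S}$ is the set of states. Timed transition: for $\delta\in\mathbb{R}_{\ge0}$, $(\ell,v)\to^{\delta}(\ell',v')$ iff both are states, $\ell=\ell'$ and $v'=v+\delta$. Discrete transition: for $t=(\ell,g,a,Y,\ell')\in T$, $(\ell,v)\to^{t}(\ell',v')$ iff both are states, $v\models g$ and $v'=v[Y:=0]$. A run from a state $s_0$ is a finite or infinite sequence $s_0s_1s_2\ldots$ of states with $s_{2i}\to^{\delta_i}s_{2i+1}\to^{t_i}s_{2i+2}$ for some $\delta_i\ge0$, $t_i\in T$ (as long as the sequence continues); a history is a finite prefix of a run, $\mathcal{H}$ the set of histories, and $ls(h)$ the last state of $h$. Coverage: $\mathit{Cover}(s\to^{\delta}s')=\{s''\in\mathbb{S}\mid \exists\,0\le\delta'\le\delta,\ s\to^{\delta'}s''\}$; $\mathit{Cover}(s)=\{s'\mid\exists\delta\ge0,\ s\to^\delta s'\}$; the coverage of a run $r=s_0s_1\ldots$ is the union of $\mathit{Cover}(s_{2i}\to^{\delta}s_{2i+1})$ over its timed transitions, together with $\mathit{Cover}(ls(r))$ if $r$ is finite. For $R\subseteq L$, a run $r$ is winning iff $\mathit{Cover}(r)$ contains a state whose location is in $R$. A controller strategy is a function $\sigma_c:\mathcal{H}\to\mathbb{R}_{\ge0}\cup\{\infty\}\cup T_c$ and an environment strategy a function $\sigma_e:\mathcal{H}\to\mathbb{R}_{\ge0}\cup\{\infty\}\cup T_u$, such that for $\sigma\in\{\sigma_c,\sigma_e\}$ and every $h$: (1) if $\sigma(h)=(\ell,g,a,Y,\ell')\in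 T$ then $ls(h)=(\ell,v)$ with $v\models g$ and $v[Y:=0]\models\mathit{Inv}(\ell')$; (2) if $\sigma(h)=\delta\in\mathbb{R}_{\ge0}$ and $ls(h)\to^{\delta}s$ for some state $s$, then $\sigma(h\to^\delta s)\in T$ (where $h\to^{\delta}s$ is $h$ extended by the delay). The global strategy $\sigma=\sigma_{(\sigma_c,\sigma_e)}$ is: if $\sigma_e(h)=t_u\in T_u$ then $\sigma(h)=t_u$; if $\sigma_c(h)=t_c\in T_c$ and $\sigma_e(h)$ is a delay then $\sigma(h)=t_c$; if both are delays $\delta,\delta'$ then $\sigma(h)=\min(\delta,\delta')$. The run induced by $\sigma$ from $s_0$ is built as follows: at even index $i$, if $\sigma(s_0\ldots s_i)=t\in T$ then $s_{i+1}=s_i$ (delay $0$) and $s_{i+2}$ is the $t$-successor; if it is a delay $\delta$ and a state $s$ with $s_i\to^\delta s$ exists, $s_{i+1}=s$; otherwise the run ends; at odd index $i$, $\sigma(s_0\ldots s_i)$ is a transition $t$ and $s_{i+1}$ is the unique state with $s_i\to^t s_{i+1}$. A run adheres to $\sigma_c$ if it is the run induced by $\sigma_{(\sigma_c,\sigma_e)}$ for some environment strategy $\sigma_e$. A controller strategy is winning from $s$ (for $R$) if all runs from $s$ adhering to it are winning; $s$ is a winning state if such a strategy exists, and $W(R)$ denotes the set of winning states. Operators on sets of states $S,S_1,S_2\subseteq\mathbb{S}$: $\mathit{WinningMoves}(S)=\{s\in\mathbb{S}\mid\exists t\in T_c,\ s'\in S,\ s\to^t s'\}$; $\mathit{Uncontrollable}(S)=\{s\in\mathbb{S}\mid\exists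 t\in T_u,\ s'\notin S,\ s\to^t s'\}$; $\mathit{SafePred}(S_1,S_2)=\{s\in\mathbb{S}\mid \exists s'\in S_1,\ \exists\delta\ge0,\ s\to^\delta s'\ \wedge\ \mathit{Cover}(s\to^\delta s')\cap S_2=\emptyset\}$. *)

(* Defs.v *)
From Stdlib Require Import Reals QArith Qreals List.
Set Implicit Arguments.
Unset Strict Implicit.

Inductive cmp := CLt | CLe | CEq | CGe | CGt.

Definition cmpR (c : cmp) (a b : R) : Prop :=
  match c with
  | CLt => (a < b)%R | CLe => (a <= b)%R | CEq => a = b
  | CGe => (a >= b)%R | CGt => (a > b)%R
  end.

(** linear term k0 + sum_i k_i p_i over parameters P, k_i rationals *)
Definition lterm (P : Type) : Type := (Q * list (Q * P))%type.

Inductive atom (X P : Type) : Type :=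
  | AClock : X -> cmp -> lterm P -> atom X P
  | AParam : lterm P -> cmp -> lterm P -> atom X P.

Definition guard (X P : Type) : Type := list (atom X P).

(** transition (l, g, a, Y, l'); the reset set Y ⊆ X is given by its
    characteristic function *)
Definition trans (L X P Act : Type) : Type :=
  (L * guard X P * Act * (X -> bool) * L)%type.

Record PTG (L X P Act : Type) := mkPTG {
  Tc : list (trans L X P Act);
  Tu : list (trans L X P Act);
  l0 : L;
  Inv : L -> guard X P;
  TcTu_disjoint : forall t, In t Tc -> ~ In t Tu;
  L_finite : exists ls : list L, forall l, In l ls;
  X_finite : exists xs : list X, forall x, In x xs;
  P_finite : exists ps : list P, forall p, In p ps
}.

Definition valuation (X P : Type) : Type := ((X -> R) * (P -> Q))%type.

Definition is_val (X P : Type) (v : valuation X P) : Prop :=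
  (forall x, (0 <= fst v x)%R) /\ (forall p, (0 <= snd v p)%Q).

Definition eval_lterm (X P : Type) (v : valuation X P) (t : lterm P) : R :=
  (Q2R (fst t) +
   fold_right (fun kp acc => Q2R (fst kp) * Q2R (snd v (snd kp)) + acc) 0
     (snd t))%R.

Definition sat_atom (X P : Type) (v : valuation X P) (a : atom X P) : Prop :=
  match a with
  | @AClock _ _ x c t => cmpR c (fst v x) (eval_lterm v t)
  | @AParam _ _ t1 c t2 => cmpR c (eval_lterm v t1) (eval_lterm v t2)
  end.

Definition sat (X P : Type) (v : valuation X P) (g : guard X P) : Prop :=
  forall a, In a g -> sat_atom v a.

Definition vshift (X P : Type) (v : valuation X P) (d : R) : valuation X P :=
  (fun x => (fst v x + d)%R, snd v).

Definition vreset (X P : Type) (v : valuation X P) (Y : X -> bool)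
  : valuation X P :=
  (fun x => if Y x then 0%R else fst v x, snd v).

Section Semantics.
Variables L X P Act : Type.
Variable G : PTG L X P Act.

Definition state : Type := (L * valuation X P)%type.
Definition Tr : Type := trans L X P Act.
Definition Tall : list Tr := Tc G ++ Tu G.

Definition tsrc (t : Tr) : L := let '(l, _, _, _, _) := t in l.
Definition tguard (t : Tr) : guard X P := let '(_, g, _, _, _) := t in g.
Definition treset (t : Tr) : X -> bool := let '(_, _, _, Y, _) := t in Y.
Definition tdst (t : Tr) : L := let '(_, _, _, _, l') := t in l'.

Definition is_state (s : state) : Prop :=
  is_val (snd s) /\ sat (snd s) (Inv G (fst s)).

Definition delay_step (d : R) (s s' : state) : Prop :=
  is_state s /\ is_state s' /\ (0 <= d)%R /\
  fst s' = fst s /\ snd s' = vshift (snd s) d.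

Definition disc_step (t : Tr) (s s' : state) : Prop :=
  is_state s /\ is_state s' /\ fst s = tsrc t /\ fst s' = tdst t /\
  sat (snd s) (tguard t) /\ snd s' = vreset (snd s) (treset t).

(** Cover(s ->^d s') (s' only fixes d, which is given explicitly) *)
Definition cover_delay (s : state) (d : R) (s'' : state) : Prop :=
  is_state s'' /\ exists d', (0 <= d')%R /\ (d' <= d)%R /\ delay_step d' s s''.

Definition cover_step (s s' s'' : state) : Prop :=
  exists d, delay_step d s s' /\ cover_delay s d s''.

Definition cover_state (s s' : state) : Prop :=
  exists d, delay_step d s s'.

(** histories: finite (nonempty) prefixes of runs, in chronological order *)
Definition history (h : list state) : Prop :=
  h <> nil /\
  (forall i s, nth_error h i = Some s -> is_state s) /\
  (forall i s s', nth_error h i = Some s -> nth_error h (S i) = Some s' ->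
     (Nat.even i = true -> exists d, delay_step d s s') /\
     (Nat.even i = false -> exists t, In t Tall /\ disc_step t s s')).

Inductive choice : Type :=
  | Delay : R -> choice
  | Infty : choice
  | Trans : Tr -> choice.

Definition strategy : Type := list state -> choice.

Definition valid_strategy (Ts : list Tr) (sg : strategy) : Prop :=
  forall h0 s, history (h0 ++ s :: nil) ->
    (forall t, sg (h0 ++ s :: nil) = Trans t ->
       In t Ts /\ fst s = tsrc t /\ sat (snd s) (tguard t) /\
       sat (vreset (snd s) (treset t)) (Inv G (tdst t))) /\
    (forall d, sg (h0 ++ s :: nil) = Delay d ->
       (0 <= d)%R /\
       forall s', delay_step d s s' ->
         exists t, sg (h0 ++ s :: s' :: nil) = Trans t).

Definition ctrl_strategy (sg : strategy) : Prop := valid_strategy (Tc G) sg.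
Definition env_strategy (sg : strategy) : Prop := valid_strategy (Tu G) sg.

Definition global_choice (c e : choice) : choice :=
  match e with
  | Trans tu => Trans tu
  | _ =>
    match c with
    | Trans tc => Trans tc
    | Delay d => match e with Delay d' => Delay (Rmin d d') | _ => Delay d end
    | Infty => e
    end
  end.

Definition global_strategy (sc se : strategy) : strategy :=
  fun h => global_choice (sc h) (se h).

(** runs: finite (rlen = Some n, n >= 1 states) or infinite (rlen = None) *)
Record run : Type := mkRun { rlen : option nat; rst : nat -> state }.

Definition in_run (r : run) (i : nat) : Prop :=
  match rlen r with None => True | Some n => (i < n)%nat end.

Definition prefix (r : run) (i : nat) : list state :=
  map (rst r) (seq 0 (S i)).

Definition induced (sg : strategy) (s0 : state) (r : run) : Prop :=
  in_run r 0 /\ rst r 0 = s0 /\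
  forall i, Nat.even i = true -> in_run r i ->
    match sg (prefix r i) with
    | Trans t =>
        in_run r (S (S i)) /\ rst r (S i) = rst r i /\
        disc_step t (rst r i) (rst r (S (S i)))
    | Delay d =>
        ((exists s, delay_step d (rst r i) s) ->
           in_run r (S i) /\ delay_step d (rst r i) (rst r (S i)) /\
           match sg (prefix r (S i)) with
           | Trans t => in_run r (S (S i)) /\
                        disc_step t (rst r (S i)) (rst r (S (S i)))
           | _ => ~ in_run r (S (S i))
           end) /\
        ((~ exists s, delay_step d (rst r i) s) -> ~ in_run r (S i))
    | Infty => ~ in_run r (S i)
    end.

Definition adheres (sc : strategy) (s0 : state) (r : run) : Prop :=
  exists se, env_strategy se /\ induced (global_strategy sc se) s0 r.

Definition cover_run (r : run) (s'' : state) : Prop :=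
  (exists i, Nat.even i = true /\ in_run r (S i) /\
             cover_step (rst r i) (rst r (S i)) s'') \/
  (exists n, rlen r = Some n /\ cover_state (rst r (n - 1)) s'').

Definition winning_run (Rg : L -> Prop) (r : run) : Prop :=
  exists s, cover_run r s /\ Rg (fst s).

Definition winning_strategy_from (Rg : L -> Prop) (sc : strategy) (s : state)
  : Prop :=
  ctrl_strategy sc /\ forall r, adheres sc s r -> winning_run Rg r.

Definition Win (Rg : L -> Prop) (s : state) : Prop :=
  is_state s /\ exists sc, winning_strategy_from Rg sc s.

Definition WinningMoves (S : state -> Prop) (s : state) : Prop :=
  is_state s /\ exists t s', In t (Tc G) /\ S s' /\ disc_step t s s'.

Definition Uncontrollable (S : state -> Prop) (s : state) : Prop :=
  is_state s /\ exists t s', In t (Tu G) /\ ~ S s' /\ disc_step t s s'.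

Definition SafePred (S1 S2 : state -> Prop) (s : state) : Prop :=
  is_state s /\ exists s' d, S1 s' /\ delay_step d s s' /\
    forall s'', cover_delay s d s'' -> ~ S2 s''.

End Semantics.

(* Main.v *)
Require Import Defs.
From Stdlib Require Import Reals QArith Qreals List.
From Stdlib Require Import Lra Lia Classical ClassicalEpsilon FunctionalExtensionality PropExtensionality.
Import ListNotations.
Open Scope R_scope.


Definition sh {L X P : Type} (s : state L X P) (a : R) : state L X P :=
  (fst s, vshift (snd s) a).

Lemma delay_iff {L X P Act} (G : PTG L X P Act) a s y :
  delay_step G a s y <-> is_state G s /\ is_state G y /\ 0 <= a /\ y = sh s a.
Proof.
  unfold delay_step, sh. destruct y as [l v]; simpl. split.
  - intros (H1 & H2 & H3 & H4 & H5). subst. tauto.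
  - intros (H1 & H2 & H3 & H4). inversion H4. subst. tauto.
Qed.

Lemma sh_sh {L X P} (s : state L X P) a b : sh (sh s a) b = sh s (a + b).
Proof.
  unfold sh, vshift; simpl. f_equal. f_equal.
  apply functional_extensionality; intros; ring.
Qed.

Lemma sh_0 {L X P} (s : state L X P) : sh s 0 = s.
Proof.
  destruct s as [l [vx vp]]. unfold sh, vshift; simpl. f_equal. f_equal.
  apply functional_extensionality; intros; ring.
Qed.

Lemma eval_shift {X P} (v : valuation X P) a t :
  eval_lterm (vshift v a) t = eval_lterm v t.
Proof. reflexivity. Qed.

Lemma convex {L X P Act} (G : PTG L X P Act) s d a :
  is_state G s -> is_state G (sh s d) -> 0 <= a <= d -> is_state G (sh s a).
Proof.
  destruct s as [l [vx vp]]. unfold is_state, sh, is_val, sat; simpl.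
  intros [[Hv Hp] Hs] [[Hv' Hp'] Hs'] Ha. split.
  - split; [intros x; specialize (Hv x); simpl in *; lra | exact Hp].
  - intros at0 Hin. specialize (Hs at0 Hin). specialize (Hs' at0 Hin).
    destruct at0 as [x c t | t1 c t2]; simpl in *; [|exact Hs].
    rewrite eval_shift in *.
    destruct c; simpl in *; cbv beta in *; idtac; lra.
Qed.

Lemma delay_det {L X P Act} (G : PTG L X P Act) a s y y' :
  delay_step G a s y -> delay_step G a s y' -> y = y'.
Proof. rewrite !delay_iff. intros (_&_&_&->) (_&_&_&->). reflexivity. Qed.

Lemma delay_comp {L X P Act} (G : PTG L X P Act) a b s y z :
  delay_step G a s y -> delay_step G b y z -> delay_step G (a + b) s z.
Proof.
  rewrite !delay_iff. intros (H1&H2&H3&->) (H4&H5&H6&->).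
  rewrite sh_sh. split; [exact H1|split; [rewrite <- sh_sh; exact H5|split; [lra|reflexivity]]].
Qed.

Definition clause_gen {L X P Act} (G : PTG L X P Act) (c0 c1 : Defs.choice L X P Act)
  (I1 I2 : Prop) (x0 x1 x2 : state L X P) : Prop :=
  match c0 with
    | Trans t =>
        I2 /\ x1 = x0 /\ disc_step G t x0 x2
    | Delay _ _ _ _ d =>
        ((exists s, delay_step G d x0 s) ->
           I1 /\ delay_step G d x0 x1 /\
           match c1 with
           | Trans t => I2 /\ disc_step G t x1 x2
           | _ => ~ I2
           end) /\
        ((~ exists s, delay_step G d x0 s) -> ~ I1)
    | Infty _ _ _ _ => ~ I1
    end.

Definition clause {L X P Act} (G : PTG L X P Act) (sg : strategy L X P Act) (r : run L X P) i :=
  clause_gen G (sg (prefix r i)) (sg (prefix r (S i))) (in_run r (S i)) (in_run r (S (S i)))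
    (rst r i) (rst r (S i)) (rst r (S (S i))).

Lemma induced_eq {L X P Act} (G : PTG L X P Act) sg s0 r :
  induced G sg s0 r <-> in_run r 0 /\ rst r 0 = s0 /\
    forall i, Nat.even i = true -> in_run r i -> clause G sg r i.
Proof. reflexivity. Qed.

Definition shrun {L X P} (r : run L X P) (k : nat) (x0 : state L X P) : run L X P :=
  mkRun (option_map (fun n => (n - k)%nat) (rlen r))
        (fun j => match j with O => x0 | S j' => rst r (S j' + k) end).

Lemma in_run_sh {L X P} (r : run L X P) k x0 j :
  in_run (shrun r k x0) j <-> in_run r (j + k).
Proof.
  unfold in_run, shrun; simpl. destruct (rlen r); simpl; [lia|tauto].
Qed.

Lemma in_run_mono {L X P} (r : run L X P) i j : (i <= j)%nat -> in_run r j -> in_run r i.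
Proof. unfold in_run. destruct (rlen r); [lia|auto]. Qed.

Lemma shift_induced {L X P Act} (G : PTG L X P Act) gs gs' r k x0 :
  induced G gs (rst r 0) r -> Nat.even k = true -> in_run r k ->
  clause G gs' (shrun r k x0) 0 ->
  (in_run (shrun r k x0) 2 -> forall j, (2 <= j)%nat ->
      gs' (prefix (shrun r k x0) j) = gs (prefix r (j + k))) ->
  induced G gs' x0 (shrun r k x0).
Proof.
  intros Hind Hk Hk' H0 Hj. apply induced_eq in Hind. destruct Hind as (_&_&Hc).
  apply induced_eq. split; [apply in_run_sh; exact Hk'|split; [reflexivity|]].
  intros i Hi Hin. destruct i as [|[|i]]; [exact H0|discriminate|].
  assert (H2 : in_run (shrun r k x0) 2) by (apply (in_run_mono _ 2 (S (S i))); [lia|exact Hin]).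
  specialize (Hc (S (S i) + k)%nat).
  assert (He : Nat.even (S (S i) + k) = true).
  { rewrite Nat.even_add, Hi, Hk. reflexivity. }
  specialize (Hc He (proj1 (in_run_sh _ _ _ _) Hin)).
  unfold clause in *.
  rewrite (Hj H2 (S (S i))) by lia. rewrite (Hj H2 (S (S (S i)))) by lia.
  rewrite (propositional_extensionality _ _ (in_run_sh r k x0 (S (S (S i))))).
  rewrite (propositional_extensionality _ _ (in_run_sh r k x0 (S (S (S (S i)))))).
  simpl rst. simpl in Hc. exact Hc.
Qed.

Lemma shift_win {L X P Act} (G : PTG L X P Act) Rg r k x0 :
  Nat.even k = true -> in_run r k ->
  (forall y, in_run (shrun r k x0) 1 -> cover_step G x0 (rst r (1 + k)) y -> cover_run G r y) ->
  (forall y, rlen r = Some (S k) -> cover_state G x0 y -> cover_run G r y) ->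
  winning_run G Rg (shrun r k x0) -> winning_run G Rg r.
Proof.
  intros Hke Hk H0 H1 [y [Hc Hy]]. exists y; split; [|exact Hy].
  destruct Hc as [(i & Hi & Hin & Hcs) | (m & Hm & Hcs)].
  - destruct i as [|[|i]]; [exact (H0 y Hin Hcs)|discriminate|].
    left. exists (S (S i) + k)%nat. split; [rewrite Nat.even_add, Hi, Hke; reflexivity|].
    split; [exact (proj1 (in_run_sh _ _ _ _) Hin)|]. exact Hcs.
  - unfold shrun in Hm; simpl in Hm. destruct (rlen r) as [n|] eqn:En; [|discriminate].
    simpl in Hm. injection Hm as Hm. subst m.
    destruct (Nat.eq_dec (n - k - 1) 0) as [E|E].
    + rewrite E in Hcs. apply (H1 y); [|exact Hcs]. f_equal.
      unfold in_run in Hk. rewrite En in Hk. lia.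
    + right. exists n. split; [exact En|].
      destruct (n - k - 1)%nat as [|j] eqn:Ej; [lia|]. simpl in Hcs.
      replace (n - 1)%nat with (S j + k)%nat by lia. exact Hcs.
Qed.

Lemma map_seq_add {A} (f : nat -> A) a n k :
  map (fun i => f (i + k)%nat) (seq a n) = map f (seq (a + k) n).
Proof.
  revert a. induction n as [|n IH]; intros a; simpl; [reflexivity|].
  f_equal. rewrite IH. reflexivity.
Qed.

Lemma prefix_sh {L X P} (r : run L X P) k x0 j :
  prefix (shrun r k x0) j = x0 :: map (rst r) (seq (S k) j).
Proof.
  unfold prefix. simpl. f_equal. rewrite <- seq_shift, map_map. simpl.
  rewrite (map_seq_add (fun i => rst r (S i)) 0 j k). simpl.
  rewrite <- seq_shift, map_map. reflexivity.
Qed.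

Lemma prefix_add {L X P} (r : run L X P) k j :
  prefix r (j + k) = prefix r k ++ map (rst r) (seq (S k) j).
Proof.
  unfold prefix. replace (S (j + k)) with (S k + j)%nat by lia.
  rewrite seq_app, map_app. reflexivity.
Qed.

Lemma shift_induced_full {L X P Act} (G : PTG L X P Act) gs gs' r k :
  induced G gs (rst r 0) r -> Nat.even k = true -> in_run r k ->
  (forall j, gs' (prefix (shrun r k (rst r k)) j) = gs (prefix r (j + k))) ->
  induced G gs' (rst r k) (shrun r k (rst r k)).
Proof.
  intros Hind Hk Hk' Hj. apply induced_eq in Hind. destruct Hind as (_&_&Hc).
  apply induced_eq. split; [apply in_run_sh; exact Hk'|split; [reflexivity|]].
  intros i Hi Hin.
  specialize (Hc (i + k)%nat).
  assert (He : Nat.even (i + k) = true).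
  { rewrite Nat.even_add, Hi, Hk. reflexivity. }
  specialize (Hc He (proj1 (in_run_sh _ _ _ _) Hin)).
  unfold clause in *.
  rewrite (Hj i). rewrite (Hj (S i)).
  rewrite (propositional_extensionality _ _ (in_run_sh r k (rst r k) (S i))).
  rewrite (propositional_extensionality _ _ (in_run_sh r k (rst r k) (S (S i)))).
  assert (Hr : forall j, rst (shrun r k (rst r k)) j = rst r (j + k)) by (intros [|j]; reflexivity).
  rewrite !Hr. exact Hc.
Qed.

Lemma hist_single {L X P Act} (G : PTG L X P Act) x : is_state G x -> history G [x].
Proof.
  intros Hx. split; [discriminate|split].
  - intros [|i] s Hs; simpl in Hs; [inversion Hs; subst; exact Hx|destruct i; discriminate].
  - intros [|i] s s' Hs Hs'; simpl in *; [discriminate|destruct i; discriminate].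
Qed.

Lemma hist_state {L X P Act} (G : PTG L X P Act) h x : history G h -> In x h -> is_state G x.
Proof.
  intros (_&Hst&_) Hin. apply In_nth_error in Hin. destruct Hin as [i Hi]. exact (Hst i x Hi).
Qed.

Lemma hist_head {L X P Act} (G : PTG L X P Act) a b x1 rest :
  history G (a :: x1 :: rest) -> is_state G b -> (exists d, delay_step G d b x1) ->
  history G (b :: x1 :: rest).
Proof.
  intros (Hne & Hst & Hstep) Hb Hd. split; [discriminate|split].
  - intros [|i] s Hs; simpl in Hs; [inversion Hs; subst; exact Hb|exact (Hst (S i) s Hs)].
  - intros [|i] s s' Hs Hs'; simpl in Hs, Hs'.
    + inversion Hs; inversion Hs'; subst. split; intros E; [exact Hd|discriminate].
    + exact (Hstep (S i) s s' Hs Hs').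
Qed.

Lemma hist_pre2 {L X P Act} (G : PTG L X P Act) r0 r1 x2 rest D t :
  history G (x2 :: rest) -> delay_step G D r0 r1 -> In t (Tall G) -> disc_step G t r1 x2 ->
  history G (r0 :: r1 :: x2 :: rest).
Proof.
  intros (Hne & Hst & Hstep) Hd Ht Hdisc. split; [discriminate|split].
  - intros [|[|i]] s Hs; simpl in Hs.
    + inversion Hs; subst. exact (proj1 Hd).
    + inversion Hs; subst. exact (proj1 (proj2 Hd)).
    + exact (Hst i s Hs).
  - intros [|[|i]] s s' Hs Hs'; simpl in Hs, Hs'.
    + inversion Hs; inversion Hs'; subst. split; intros E; [exists D; exact Hd|discriminate].
    + inversion Hs; inversion Hs'; subst. split; intros E; [discriminate|exists t; split; assumption].
    + exact (Hstep i s s' Hs Hs').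
Qed.

Lemma hist_drop2 {L X P Act} (G : PTG L X P Act) a b rest :
  history G (a :: b :: rest) -> rest <> [] -> history G rest.
Proof.
  intros (Hne & Hst & Hstep) Hr. split; [exact Hr|split].
  - intros i s Hs. exact (Hst (S (S i)) s Hs).
  - intros i s s' Hs Hs'. exact (Hstep (S (S i)) s s' Hs Hs').
Qed.

Definition LV {L X P Act} (G : PTG L X P Act) (Ts : list (Tr L X P Act))
  (sg : strategy L X P Act) (h : list (state L X P)) (y : state L X P) : Prop :=
  (forall t, sg (h ++ y :: nil) = Trans t ->
       In t Ts /\ fst y = tsrc t /\ sat (snd y) (tguard t) /\
       sat (vreset (snd y) (treset t)) (Inv G (tdst t))) /\
  (forall d, sg (h ++ y :: nil) = Delay _ _ _ _ d ->
       (0 <= d)%R /\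
       forall y', delay_step G d y y' ->
         exists t, sg (h ++ y :: y' :: nil) = Trans t).

Lemma valid_eq {L X P Act} (G : PTG L X P Act) Ts sg :
  valid_strategy G Ts sg <-> forall h y, history G (h ++ y :: nil) -> LV G Ts sg h y.
Proof. reflexivity. Qed.

Lemma LV_transfer {L X P Act} (G : PTG L X P Act) Ts sg sg' h h' y :
  (forall l, sg (h ++ y :: l) = sg' (h' ++ y :: l)) -> LV G Ts sg' h' y -> LV G Ts sg h y.
Proof.
  intros E [H1 H2]. split.
  - intros t Ht. rewrite E in Ht. exact (H1 t Ht).
  - intros d Hd. rewrite E in Hd. destruct (H2 d Hd) as [Hd0 Hd1]. split; [exact Hd0|].
    intros y' Hy'. rewrite E. exact (Hd1 y' Hy').
Qed.

Lemma LV_infty {L X P Act} (G : PTG L X P Act) Ts sg h y :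
  sg (h ++ y :: nil) = Infty _ _ _ _ -> LV G Ts sg h y.
Proof. intros E. split; intros t Ht; rewrite E in Ht; discriminate. Qed.

Definition dec (Q : Prop) : {Q} + {~ Q} := excluded_middle_informative Q.

Definition infS {L X P Act} : strategy L X P Act := fun _ => Infty _ _ _ _.

Lemma infS_valid {L X P Act} (G : PTG L X P Act) Ts : valid_strategy G Ts infS.
Proof. apply valid_eq. intros h y _. apply LV_infty. reflexivity. Qed.

Definition pk {L X P Act} (G : PTG L X P Act) (Rg : L -> Prop) (w : state L X P)
  : strategy L X P Act :=
  epsilon (inhabits infS)
    (fun sg => ctrl_strategy G sg /\ (Win G Rg w -> winning_strategy_from G Rg sg w)).

Lemma pk_spec {L X P Act} (G : PTG L X P Act) Rg w :
  ctrl_strategy G (pk G Rg w) /\ (Win G Rg w -> winning_strategy_from G Rg (pk G Rg w) w).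
Proof.
  apply (epsilon_spec (inhabits infS)
    (fun sg => ctrl_strategy G sg /\ (Win G Rg w -> winning_strategy_from G Rg sg w))).
  destruct (classic (Win G Rg w)) as [Hw|Hw].
  - destruct Hw as [Hs [sc Hsc]]. exists sc. split; [exact (proj1 Hsc)|intros; exact Hsc].
  - exists infS. split; [apply infS_valid|intros Hw'; contradiction].
Qed.

Definition mkSC {L X P Act} (s s' : state L X P) (first : Defs.choice L X P Act)
  (sec : state L X P -> Defs.choice L X P Act) (bA : state L X P -> Prop)
  (sg' : strategy L X P Act) (pks : state L X P -> strategy L X P Act) : strategy L X P Act :=
  fun h => match h with
  | [] => Infty _ _ _ _
  | x :: t => if dec (x = s) then
      match t with
      | [] => first
      | x1 :: rest =>
        match rest with
        | [] => sec x1
        | z :: r' => if dec (bA x1) then sg' (s' :: x1 :: z :: r') else pks z (z :: r')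
        end
      end else Infty _ _ _ _
  end.

Lemma mkSC_valid {L X P Act} (G : PTG L X P Act) s s' first sec bA sg' pks :
  ctrl_strategy G sg' -> (forall w, ctrl_strategy G (pks w)) ->
  is_state G s' ->
  (forall x1, bA x1 -> exists d, delay_step G d s' x1) ->
  LV G (Tc G) (mkSC s s' first sec bA sg' pks) [] s ->
  (forall x1, history G [s; x1] -> LV G (Tc G) (mkSC s s' first sec bA sg' pks) [s] x1) ->
  ctrl_strategy G (mkSC s s' first sec bA sg' pks).
Proof.
  intros Hv Hpk Hs' HbA H0 H1. unfold ctrl_strategy. apply valid_eq.
  intros h y Hh. destruct h as [|x0 [|x1 h1]].
  - destruct (dec (y = s)) as [E|E]; [subst; exact H0|].
    apply LV_infty. simpl. destruct (dec (y = s)); [contradiction|reflexivity].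
  - destruct (dec (x0 = s)) as [E|E]; [subst; exact (H1 y Hh)|].
    apply LV_infty. simpl. destruct (dec (x0 = s)); [contradiction|reflexivity].
  - destruct (dec (x0 = s)) as [E|E].
    2:{ apply LV_infty. simpl. destruct (dec (x0 = s)); [contradiction|reflexivity]. }
    subst x0. destruct (dec (bA x1)) as [B|B].
    + apply (LV_transfer _ _ _ sg' _ (s' :: x1 :: h1)).
      * intros l. simpl. destruct (dec (s = s)) as [_|C]; [|exfalso; apply C; reflexivity].
        destruct h1 as [|z h1]; simpl; (destruct (dec (bA x1)); [reflexivity|contradiction]).
      * apply (proj1 (valid_eq _ _ _) Hv). simpl in Hh |- *.
        apply (hist_head _ s); [exact Hh|exact Hs'|exact (HbA x1 B)].
    + destruct h1 as [|z h1].
      * apply (LV_transfer _ _ _ (pks y) _ []).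
        -- intros l. simpl. destruct (dec (s = s)) as [_|C]; [|exfalso; apply C; reflexivity].
           destruct (dec (bA x1)); [contradiction|reflexivity].
        -- apply (proj1 (valid_eq _ _ _) (Hpk y)). simpl in Hh |- *.
           exact (hist_drop2 _ _ _ _ Hh ltac:(discriminate)).
      * apply (LV_transfer _ _ _ (pks z) _ (z :: h1)).
        -- intros l. simpl. destruct (dec (s = s)) as [_|C]; [|exfalso; apply C; reflexivity].
           destruct (dec (bA x1)); [contradiction|reflexivity].
        -- apply (proj1 (valid_eq _ _ _) (Hpk z)). simpl in Hh |- *.
           exact (hist_drop2 _ _ _ _ Hh ltac:(discriminate)).
Qed.

Definition senv {L X P Act} (a : state L X P) (p : list (state L X P))
  (spec : Defs.choice L X P Act) (se : strategy L X P Act) : strategy L X P Act :=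
  fun h => match h with
  | [] => Infty _ _ _ _
  | z :: rest => if dec (z = a) then
       match rest with [] => spec | z1 :: rest' => se (p ++ z1 :: rest') end
     else Infty _ _ _ _
  end.

Lemma senv_valid {L X P Act} (G : PTG L X P Act) a p spec se :
  env_strategy G se ->
  (forall l, l <> [] -> history G (a :: l) -> history G (p ++ l)) ->
  LV G (Tu G) (senv a p spec se) [] a ->
  env_strategy G (senv a p spec se).
Proof.
  intros Hv Hh H0. unfold env_strategy. apply valid_eq.
  intros h y Hy. destruct h as [|z h1].
  - destruct (dec (y = a)) as [E|E]; [subst; exact H0|].
    apply LV_infty. simpl. destruct (dec (y = a)); [contradiction|reflexivity].
  - destruct (dec (z = a)) as [E|E].
    2:{ apply LV_infty. simpl. destruct (dec (z = a)); [contradiction|reflexivity]. }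
    subst z. apply (LV_transfer _ _ _ se _ (p ++ h1)).
    + intros l. simpl. destruct (dec (a = a)) as [_|C]; [|exfalso; apply C; reflexivity].
      rewrite <- app_assoc. destruct h1; reflexivity.
    + apply (proj1 (valid_eq _ _ _) Hv). rewrite <- app_assoc. apply Hh.
      * destruct h1; discriminate.
      * exact Hy.
Qed.

Lemma hist3 {L X P Act} (G : PTG L X P Act) a b c :
  history G [a; b; c] -> (exists D, delay_step G D a b) /\ (exists t, In t (Tall G) /\ disc_step G t b c).
Proof.
  intros (_&_&Hs). split.
  - exact (proj1 (Hs 0%nat a b eq_refl eq_refl) eq_refl).
  - exact (proj2 (Hs 1%nat b c eq_refl eq_refl) eq_refl).
Qed.

Lemma tail_win {L X P Act} (G : PTG L X P Act) Rg sc se r sg :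
  env_strategy G se -> induced G (global_strategy sc se) (rst r 0) r -> in_run r 2 ->
  history G [rst r 0; rst r 1; rst r 2] ->
  winning_strategy_from G Rg sg (rst r 2) ->
  (forall rest, sc (rst r 0 :: rst r 1 :: rst r 2 :: rest) = sg (rst r 2 :: rest)) ->
  winning_run G Rg r.
Proof.
  intros Hse Hind H2 Hh [Hsv Hsw] Hsc.
  set (p := [rst r 0; rst r 1; rst r 2]).
  set (se2 := senv (rst r 2) p (se p) se).
  assert (Hadh : adheres G sg (rst r 2) (shrun r 2 (rst r 2))).
  { exists se2. split.
    - apply senv_valid; [exact Hse| |].
      + intros l Hl Hal. destruct (hist3 _ _ _ _ Hh) as [[D HD] [t [Ht Hdt]]].
        exact (hist_pre2 _ _ _ _ _ D t Hal HD Ht Hdt).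
      + apply (LV_transfer _ _ _ se _ [rst r 0; rst r 1]).
        * intros [|z l]; simpl; destruct (dec (rst r 2 = rst r 2)) as [_|C]; try reflexivity; contradiction.
        * apply (proj1 (valid_eq _ _ _) Hse). exact Hh.
    - apply (shift_induced_full G (global_strategy sc se)); [exact Hind|reflexivity|exact H2|].
      intros j. rewrite prefix_sh, prefix_add. unfold global_strategy.
      set (T := map (rst r) (seq 3 j)). simpl (prefix r 2). simpl app. f_equal.
      + rewrite Hsc. reflexivity.
      + unfold se2, senv. destruct (dec (rst r 2 = rst r 2)) as [_|C]; [|contradiction].
        destruct T; reflexivity. }
  apply (shift_win G Rg r 2 (rst r 2)); [reflexivity|exact H2| | |exact (Hsw _ Hadh)].
  - intros y Hin Hc. left. exists 2%nat. split; [reflexivity|].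
    split; [exact (proj1 (in_run_sh _ _ _ _) Hin) | exact Hc].
  - intros y En Hc. right. exists 3%nat. split; [exact En| exact Hc].
Qed.

Lemma head_win {L X P Act} (G : PTG L X P Act) Rg gs sg' se' r s s' d :
  induced G gs s r -> delay_step G d s s' -> env_strategy G se' ->
  winning_strategy_from G Rg sg' s' ->
  clause G (global_strategy sg' se') (shrun r 0 s') 0 ->
  (in_run r 2 -> forall j, (2 <= j)%nat ->
     global_strategy sg' se' (s' :: map (rst r) (seq 1 j)) = gs (s :: map (rst r) (seq 1 j))) ->
  winning_run G Rg r.
Proof.
  intros Hind Hd Hse [Hv Hw] Hc0 Hj.
  assert (Hr0 : rst r 0 = s) by exact (proj1 (proj2 Hind)).
  assert (Hin0 : in_run r 0) by exact (proj1 Hind).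
  assert (Hadh : adheres G sg' s' (shrun r 0 s')).
  { exists se'. split; [exact Hse|].
    apply (shift_induced G gs); [rewrite Hr0; exact Hind|reflexivity|exact Hin0|exact Hc0|].
    intros H2 j Hj2. rewrite prefix_sh, prefix_add. unfold prefix at 1. simpl seq. simpl map. rewrite Hr0. simpl app.
    apply Hj; [exact (proj1 (in_run_sh _ _ _ _) H2)|exact Hj2]. }
  apply (shift_win G Rg r 0 s'); [reflexivity|exact Hin0| | |exact (Hw _ Hadh)].
  - intros y Hin [D [HD Hcd]]. left. exists 0%nat. split; [reflexivity|].
    split; [exact (proj1 (in_run_sh _ _ _ _) Hin)|].
    rewrite Hr0. exists (d + D). split; [exact (delay_comp _ _ _ _ _ _ Hd HD)|].
    destruct Hcd as [Hy [d' (Hd'0 & Hd'1 & Hd')]]. split; [exact Hy|].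
    exists (d + d'). pose proof (proj1 (delay_iff _ _ _ _) Hd) as (_&_&Hd0&_).
    split; [lra|split; [lra|exact (delay_comp _ _ _ _ _ _ Hd Hd')]].
  - intros y En [e He]. right. exists 1%nat. split; [exact En|]. simpl. rewrite Hr0.
    exists (d + e). exact (delay_comp _ _ _ _ _ _ Hd He).
Qed.

Lemma delay0 {L X P Act} (G : PTG L X P Act) s : is_state G s -> delay_step G 0 s s.
Proof. intros Hs. apply delay_iff. rewrite sh_0. split; [exact Hs|split;[exact Hs|split;[lra|reflexivity]]]. Qed.

Lemma hist2 {L X P Act} (G : PTG L X P Act) D a b :
  delay_step G D a b -> history G [a; b].
Proof.
  intros Hd. apply (hist_head G b). 2: exact (proj1 Hd). 2: exists D; exact Hd.
  pose proof (proj1 (proj2 Hd)) as Hb.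
  split; [discriminate|split].
  - intros [|[|i]] x Hx; simpl in Hx; try (inversion Hx; subst; exact Hb). destruct i; discriminate.
  - intros [|[|i]] x x' Hx Hx'; simpl in *; try discriminate; try (destruct i; discriminate).
    inversion Hx; inversion Hx'; subst. split; intros E; [exists 0; apply delay0; exact Hb|discriminate].
Qed.

Lemma hist3_mk {L X P Act} (G : PTG L X P Act) D a b c t :
  delay_step G D a b -> In t (Tall G) -> disc_step G t b c -> history G [a; b; c].
Proof.
  intros Hd Ht Hdisc. apply (hist_pre2 G a b c [] D t); auto.
  apply hist_single. exact (proj1 (proj2 Hdisc)).
Qed.

Lemma in_Tall_u {L X P Act} (G : PTG L X P Act) t : In t (Tu G) -> In t (Tall G).
Proof. intros H. unfold Tall. apply in_or_app. right. exact H. Qed.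
Lemma in_Tall_c {L X P Act} (G : PTG L X P Act) t : In t (Tc G) -> In t (Tall G).
Proof. intros H. unfold Tall. apply in_or_app. left. exact H. Qed.

Lemma disc_det {L X P Act} (G : PTG L X P Act) t a b c :
  disc_step G t a b -> disc_step G t a c -> b = c.
Proof.
  intros (_&_&_&H1&_&H2) (_&_&_&H3&_&H4). destruct b, c; simpl in *. subst. reflexivity.
Qed.


Lemma cover_mid {L X P Act} (G : PTG L X P Act) s d D y :
  delay_step G D s y -> D <= d -> cover_delay G s d y.
Proof.
  intros HD Hle. split; [exact (proj1 (proj2 HD))|]. exists D.
  pose proof (proj1 (delay_iff _ _ _ _) HD) as (_&_&H0&_). split; [exact H0|split; [exact Hle|exact HD]].
Qed.

Lemma notUnc {L X P Act} (G : PTG L X P Act) Rg s d x y tu :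
  (forall s'', cover_delay G s d s'' -> ~ Uncontrollable G (Win G Rg) s'') ->
  cover_delay G s d x -> In tu (Tu G) -> disc_step G tu x y -> Win G Rg y.
Proof.
  intros Hsafe Hc Ht Hdisc. apply NNPP. intros Hn. apply (Hsafe x Hc).
  split; [exact (proj1 Hc)|]. exists tu, y. auto.
Qed.

Lemma B_win {L X P Act} (G : PTG L X P Act) Rg s s' first sec bA sg' se r :
  env_strategy G se ->
  induced G (global_strategy (mkSC s s' first sec bA sg' (pk G Rg)) se) s r ->
  in_run r 2 -> ~ bA (rst r 1) -> history G [s; rst r 1; rst r 2] ->
  Win G Rg (rst r 2) -> winning_run G Rg r.
Proof.
  intros Hse Hind H2 HnB Hh Hw.
  assert (Hr0 : rst r 0 = s) by exact (proj1 (proj2 Hind)).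
  apply (tail_win G Rg (mkSC s s' first sec bA sg' (pk G Rg)) se r (pk G Rg (rst r 2))).
  - exact Hse.
  - rewrite Hr0. exact Hind.
  - exact H2.
  - rewrite Hr0. exact Hh.
  - exact (proj2 (pk_spec G Rg (rst r 2)) Hw).
  - intros rest. rewrite Hr0. unfold mkSC. destruct (dec (s = s)) as [_|C]; [|contradiction].
    destruct (dec (bA (rst r 1))); [contradiction|reflexivity].
Qed.

Lemma prefix0 {L X P} (r : run L X P) : prefix r 0 = [rst r 0].
Proof. reflexivity. Qed.
Lemma prefix1 {L X P} (r : run L X P) : prefix r 1 = [rst r 0; rst r 1].
Proof. reflexivity. Qed.

Lemma mkSC0 {L X P Act} (s s' : state L X P) (first : Defs.choice L X P Act) sec bA sg' pks :
  mkSC s s' first sec bA sg' pks [s] = first.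
Proof. unfold mkSC. destruct (dec (s = s)) as [_|C]; [reflexivity|contradiction]. Qed.
Lemma mkSC1 {L X P Act} (s s' : state L X P) (first : Defs.choice L X P Act) sec bA sg' pks x1 :
  mkSC s s' first sec bA sg' pks [s; x1] = sec x1.
Proof. unfold mkSC. destruct (dec (s = s)) as [_|C]; [reflexivity|contradiction]. Qed.

Lemma case_WM {L X P Act} (G : PTG L X P Act) Rg s s' d t s3 :
  is_state G s -> delay_step G d s s' ->
  (forall s'', cover_delay G s d s'' -> ~ Uncontrollable G (Win G Rg) s'') ->
  In t (Tc G) -> Win G Rg s3 -> disc_step G t s' s3 -> Win G Rg s.
Proof.
  intros Hs Hd Hsafe Ht Hw3 Hdisc.
  pose proof (proj1 (delay_iff _ _ _ _) Hd) as (_&Hs'&Hd0&Es').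
  set (sec := fun x1 : state L X P => if dec (x1 = s') then Trans t else Infty L X P Act).
  split; [exact Hs|]. exists (mkSC s s' (Delay L X P Act d) sec (fun _ => False) infS (pk G Rg)). split.
  - apply mkSC_valid.
    + apply infS_valid.
    + intros w. exact (proj1 (pk_spec G Rg w)).
    + exact Hs'.
    + intros x1 [].
    + split.
      * intros t0 E. cbn [app] in E. rewrite mkSC0 in E. discriminate.
      * intros d0 E. cbn [app] in E. rewrite mkSC0 in E. injection E as <-. split; [exact Hd0|].
        intros y' Hy'. rewrite (delay_det _ _ _ _ _ Hy' Hd). cbn [app]. rewrite mkSC1. unfold sec.
        destruct (dec (s' = s')) as [_|C]; [eexists; reflexivity|contradiction].
    + intros x1 _. split.
      * intros t0 E. cbn [app] in E. rewrite mkSC1 in E. unfold sec in E.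
        destruct (dec (x1 = s')) as [->|]; [|discriminate]. injection E as <-.
        destruct Hdisc as (_&Hs3&Hsrc&Hdst&Hg&Hv).
        split; [exact Ht|split; [exact Hsrc|split; [exact Hg|]]].
        rewrite <- Hv, <- Hdst. exact (proj2 Hs3).
      * intros d0 E. cbn [app] in E. rewrite mkSC1 in E. unfold sec in E.
        destruct (dec (x1 = s')); discriminate.
  - intros r [se [Hse Hind]].
    pose proof Hind as Hind'. apply induced_eq in Hind'. destruct Hind' as (Hin0 & Hr0 & Hc).
    specialize (Hc 0%nat eq_refl Hin0). unfold clause in Hc.
    rewrite prefix0, prefix1, Hr0 in Hc. unfold global_strategy in Hc.
    rewrite mkSC0, mkSC1 in Hc.
    enough (H : in_run r 2 /\ history G [s; rst r 1; rst r 2] /\ Win G Rg (rst r 2)).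
    { destruct H as (H2 & Hh & Hw).
      exact (B_win G Rg s s' _ sec (fun _ => False) infS se r Hse Hind H2 (fun f => f) Hh Hw). }
    pose proof (proj1 (valid_eq _ _ _) Hse) as LVs.
    assert (Aft : forall D, delay_step G D s (rst r 1) -> D <= d -> in_run r 1 ->
      (match global_choice (sec (rst r 1)) (se [s; rst r 1]) with
       | Trans t0 => in_run r 2 /\ disc_step G t0 (rst r 1) (rst r 2)
       | _ => ~ in_run r 2 end) ->
      (rst r 1 = s' \/ exists tu, se [s; rst r 1] = Trans tu) ->
      in_run r 2 /\ history G [s; rst r 1; rst r 2] /\ Win G Rg (rst r 2)).
    { intros D HD HDd H1 Hm Hor.
      destruct (se [s; rst r 1]) as [δ1| |tu] eqn:E1.
      - unfold sec in Hm. destruct (dec (rst r 1 = s')) as [Er1|Ner]; simpl in Hm.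
        + destruct Hm as [H2 Hdt]. split; [exact H2|split].
          * exact (hist3_mk G D _ _ _ t HD (in_Tall_c _ _ Ht) Hdt).
          * rewrite Er1 in Hdt. rewrite (disc_det _ _ _ _ _ Hdt Hdisc). exact Hw3.
        + destruct Hor as [C|[tu C]]; [contradiction|discriminate].
      - unfold sec in Hm. destruct (dec (rst r 1 = s')) as [Er1|Ner]; simpl in Hm.
        + destruct Hm as [H2 Hdt]. split; [exact H2|split].
          * exact (hist3_mk G D _ _ _ t HD (in_Tall_c _ _ Ht) Hdt).
          * rewrite Er1 in Hdt. rewrite (disc_det _ _ _ _ _ Hdt Hdisc). exact Hw3.
        + destruct Hor as [C|[tu C]]; [contradiction|discriminate].
      - simpl in Hm. destruct Hm as [H2 Hdt].
        destruct (LVs [s] (rst r 1) (hist2 G D _ _ HD)) as [Htu _].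
        specialize (Htu tu E1). destruct Htu as [Htu _].
        split; [exact H2|split].
        + exact (hist3_mk G D _ _ _ tu HD (in_Tall_u _ _ Htu) Hdt).
        + exact (notUnc G Rg s d _ _ tu Hsafe (cover_mid G s d D _ HD HDd) Htu Hdt). }
    destruct (LVs [] s (hist_single G s Hs)) as [LT LD].
    destruct (se [s]) as [δ| |tu] eqn:E0; simpl in Hc.
    + destruct (LD δ E0) as [Hδ0 Hδ].
      assert (Hm0 : 0 <= Rmin d δ <= d) by (unfold Rmin; destruct (Rle_dec d δ); lra).
      assert (Hp : exists y, delay_step G (Rmin d δ) s y).
      { exists (sh s (Rmin d δ)). apply delay_iff. split; [exact Hs|split; [|split; [lra|reflexivity]]].
        apply (convex G s d); [exact Hs| rewrite <- Es'; exact Hs' | exact Hm0]. }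
      destruct (proj1 Hc Hp) as (H1 & HD & Hm).
      apply (Aft (Rmin d δ) HD ltac:(lra) H1 Hm).
      destruct (Rle_dec δ d) as [Hle|Hgt].
      * right. rewrite Rmin_right in HD by exact Hle. exact (Hδ _ HD).
      * left. rewrite Rmin_left in HD by lra. exact (delay_det _ _ _ _ _ HD Hd).
    + destruct (proj1 Hc (ex_intro _ s' Hd)) as (H1 & HD & Hm).
      apply (Aft d HD ltac:(lra) H1 Hm). left. exact (delay_det _ _ _ _ _ HD Hd).
    + destruct Hc as (H2 & Er1 & Hdt).
      destruct (LT tu E0) as [Htu _]. rewrite <- Er1 in Hdt.
      assert (HD0 : delay_step G 0 s (rst r 1)) by (rewrite Er1; apply delay0; exact Hs).
      split; [exact H2|split].
      * exact (hist3_mk G 0 _ _ _ tu HD0 (in_Tall_u _ _ Htu) Hdt).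
      * exact (notUnc G Rg s d _ _ tu Hsafe (cover_mid G s d 0 _ HD0 Hd0) Htu Hdt).
Qed.

Lemma sh_pw {L X P} (s : state L X P) a b c c' :
  sh s a = sh s b -> (a = b -> c = c') -> sh s c = sh s c'.
Proof.
  destruct s as [l [vx vp]]; unfold sh, vshift; simpl. intros H Himp.
  injection H as H. f_equal. f_equal. apply functional_extensionality. intros x.
  pose proof (equal_f H x) as Hx. simpl in Hx. assert (E : a = b) by lra.
  rewrite (Himp E). reflexivity.
Qed.

Lemma reachA {L X P Act} (G : PTG L X P Act) s s' d D y :
  delay_step G D s y -> d <= D -> s' = sh s d -> is_state G s' ->
  exists δ, delay_step G δ s' y.
Proof.
  intros HD Hle Es Hs'. exists (D - d). apply delay_iff in HD. destruct HD as (_&Hy&_&->).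
  apply delay_iff. split; [exact Hs'|split; [exact Hy|split; [lra|]]].
  rewrite Es, sh_sh. f_equal. ring.
Qed.

Lemma clause_delay_transfer {L X P Act} (G : PTG L X P Act) a b c1 c1' I1 I2 x0 x0' x1 x2 :
  clause_gen G (Delay L X P Act a) c1 I1 I2 x0 x1 x2 ->
  (forall y, delay_step G a x0 y <-> delay_step G b x0' y) ->
  (I1 -> c1 = c1') ->
  clause_gen G (Delay L X P Act b) c1' I1 I2 x0' x1 x2.
Proof.
  simpl. intros [Hp Hn] Hiff Hc. split.
  - intros [y Hy]. destruct (Hp (ex_intro _ y (proj2 (Hiff y) Hy))) as (H1 & Hd & Hm).
    split; [exact H1|split; [exact (proj1 (Hiff _) Hd)|]]. rewrite <- (Hc H1). exact Hm.
  - intros Hn' H1. apply Hn; [|exact H1]. intros [y Hy]. apply Hn'. exists y. exact (proj1 (Hiff y) Hy).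
Qed.

Lemma case_WinT {L X P Act} (G : PTG L X P Act) Rg s s' d sg' t :
  is_state G s -> delay_step G d s s' ->
  (forall s'', cover_delay G s d s'' -> ~ Uncontrollable G (Win G Rg) s'') ->
  winning_strategy_from G Rg sg' s' -> sg' [s'] = Trans t -> Win G Rg s.
Proof.
  intros Hs Hd Hsafe Hwin Et.
  pose proof (proj1 Hwin) as Hv.
  pose proof (proj1 (delay_iff _ _ _ _) Hd) as (_&Hs'&Hd0&Es').
  set (sec := fun x1 : state L X P => if dec (x1 = s') then Trans t else Infty L X P Act).
  set (bA := fun x1 : state L X P => x1 = s').
  destruct (proj1 (valid_eq _ _ _) Hv [] s' (hist_single G s' Hs')) as [VT VD].
  split; [exact Hs|]. exists (mkSC s s' (Delay L X P Act d) sec bA sg' (pk G Rg)). split.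
  - apply mkSC_valid.
    + exact Hv.
    + intros w. exact (proj1 (pk_spec G Rg w)).
    + exact Hs'.
    + intros x1 Hb. unfold bA in Hb. subst x1. exists 0. apply delay0. exact Hs'.
    + split.
      * intros t0 E. cbn [app] in E. rewrite mkSC0 in E. discriminate.
      * intros d0 E. cbn [app] in E. rewrite mkSC0 in E. injection E as <-. split; [exact Hd0|].
        intros y' Hy'. rewrite (delay_det _ _ _ _ _ Hy' Hd). cbn [app]. rewrite mkSC1. unfold sec.
        destruct (dec (s' = s')) as [_|C]; [eexists; reflexivity|contradiction].
    + intros x1 _. split.
      * intros t0 E. cbn [app] in E. rewrite mkSC1 in E. unfold sec in E.
        destruct (dec (x1 = s')) as [->|]; [|discriminate]. injection E as <-.
        exact (VT t Et).
      * intros d0 E. cbn [app] in E. rewrite mkSC1 in E. unfold sec in E.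
        destruct (dec (x1 = s')); discriminate.
  - intros r [se [Hse Hind]].
    pose proof Hind as Hind'. apply induced_eq in Hind'. destruct Hind' as (Hin0 & Hr0 & Hc).
    specialize (Hc 0%nat eq_refl Hin0). unfold clause in Hc.
    rewrite prefix0, prefix1, Hr0 in Hc. unfold global_strategy in Hc.
    rewrite mkSC0, mkSC1 in Hc.
    pose proof (proj1 (valid_eq _ _ _) Hse) as LVs.
    destruct (LVs [] s (hist_single G s Hs)) as [LT LD].
    set (seTr := match se [s; s'] with Trans tu => Trans tu | _ => Infty L X P Act end).
    set (spec := match se [s] with
                 | Trans tu => if dec (s = s') then Trans tu else seTr
                 | _ => seTr end).
    set (se' := senv s' [s] spec se).
    assert (HA : rst r 1 = s' -> in_run r 2 ->
       disc_step G (match spec with Trans tu => tu | _ => t end) s' (rst r 2) ->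
       winning_run G Rg r).
    { intros Er1 H2 Hdt.
      apply (head_win G Rg _ sg' se' r s s' d Hind Hd).
      - apply senv_valid; [exact Hse| |].
        + intros [|x1 l] Hl Hh; [contradiction|]. simpl.
          apply (hist_head G s'); [exact Hh|exact Hs|].
          destruct Hh as (_&_&Hst). destruct (proj1 (Hst 0%nat s' x1 eq_refl eq_refl) eq_refl) as [δ Hδ].
          exists (d + δ). exact (delay_comp _ _ _ _ _ _ Hd Hδ).
        + split.
          * intros tu E. cbn [app] in E. unfold se', senv in E.
            destruct (dec (s' = s')) as [_|C]; [|contradiction].
            unfold spec, seTr in E. destruct (se [s]) eqn:E0.
            -- destruct (se [s; s']) eqn:E1; try discriminate. injection E as <-.
               exact (proj1 (LVs [s] s' (hist2 G d _ _ Hd)) t0 E1).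
            -- destruct (se [s; s']) eqn:E1; try discriminate. injection E as <-.
               exact (proj1 (LVs [s] s' (hist2 G d _ _ Hd)) t0 E1).
            -- destruct (dec (s = s')) as [Ess|Ess].
               ++ injection E as <-. rewrite <- Ess. exact (LT t0 E0).
               ++ destruct (se [s; s']) eqn:E1; try discriminate. injection E as <-.
                  exact (proj1 (LVs [s] s' (hist2 G d _ _ Hd)) t1 E1).
          * intros d0 E. cbn [app] in E. unfold se', senv in E.
            destruct (dec (s' = s')) as [_|C]; [|contradiction].
            unfold spec, seTr in E.
            destruct (se [s]); [| |destruct (dec (s = s'))];
              destruct (se [s; s']); discriminate.
      - exact Hwin.
      - unfold clause. rewrite !prefix_sh. simpl seq. simpl map. unfold global_strategy.
        rewrite Et.
        assert (Ese : se' [s'] = spec).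
        { unfold se', senv. destruct (dec (s' = s')) as [_|C]; [reflexivity|contradiction]. }
        rewrite Ese. simpl clause_gen.
        assert (Egc : global_choice (Trans t) spec = Trans (match spec with Trans tu => tu | _ => t end))
          by (destruct spec; reflexivity).
        rewrite Egc. split; [exact (proj2 (in_run_sh r 0 s' 2) H2)|].
        split; [exact Er1|exact Hdt].
      - intros _ j Hj. destruct j as [|[|j]]; [lia|lia|]. simpl seq. simpl map.
        unfold global_strategy. f_equal.
        + unfold mkSC. destruct (dec (s = s)) as [_|C]; [|contradiction].
          destruct (dec (bA (rst r 1))) as [_|C]; [reflexivity|contradiction].
        + unfold se', senv. destruct (dec (s' = s')) as [_|C]; [reflexivity|contradiction]. }
    destruct (se [s]) as [δ| |tu] eqn:E0; simpl in Hc.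
    + destruct (LD δ E0) as [Hδ0 Hδ].
      assert (Hm0 : 0 <= Rmin d δ <= d) by (unfold Rmin; destruct (Rle_dec d δ); lra).
      assert (Hp : exists y, delay_step G (Rmin d δ) s y).
      { exists (sh s (Rmin d δ)). apply delay_iff. split; [exact Hs|split; [|split; [lra|reflexivity]]].
        apply (convex G s d); [exact Hs| rewrite <- Es'; exact Hs' | exact Hm0]. }
      destruct (proj1 Hc Hp) as (H1 & HD & Hm).
      destruct (dec (rst r 1 = s')) as [Er1|Ner].
      * rewrite Er1 in Hm. unfold sec in Hm. destruct (dec (s' = s')) as [_|C]; [|contradiction].
        destruct (se [s; s']) as [| |tu'] eqn:E1; simpl in Hm; destruct Hm as [H2 Hdt];
          (apply HA; [exact Er1|exact H2|]); unfold spec, seTr; rewrite ?E0, ?E1; exact Hdt.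
      * assert (Hlt : δ < d).
        { destruct (Rlt_dec δ d) as [l|n]; [exact l|]. exfalso. apply Ner.
          rewrite Rmin_left in HD by lra. exact (delay_det _ _ _ _ _ HD Hd). }
        rewrite Rmin_right in HD by lra.
        destruct (Hδ _ HD) as [tu Etu]. cbn [app] in Etu. rewrite Etu in Hm.
        assert (Egc : global_choice (sec (rst r 1)) (Trans tu) = Trans tu) by reflexivity.
        rewrite Egc in Hm. destruct Hm as [H2 Hdt].
        destruct (proj1 (LVs [s] (rst r 1) (hist2 G δ _ _ HD)) tu Etu) as [Htu _].
        apply (B_win G Rg s s' _ sec bA sg' se r Hse Hind H2 Ner).
        -- exact (hist3_mk G δ _ _ _ tu HD (in_Tall_u _ _ Htu) Hdt).
        -- exact (notUnc G Rg s d _ _ tu Hsafe (cover_mid G s d δ _ HD ltac:(lra)) Htu Hdt).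
    + destruct (proj1 Hc (ex_intro _ s' Hd)) as (H1 & HD & Hm).
      assert (Er1 : rst r 1 = s') by exact (delay_det _ _ _ _ _ HD Hd).
      rewrite Er1 in Hm. unfold sec in Hm. destruct (dec (s' = s')) as [_|C]; [|contradiction].
      destruct (se [s; s']) as [| |tu'] eqn:E1; simpl in Hm; destruct Hm as [H2 Hdt];
        (apply HA; [exact Er1|exact H2|]); unfold spec, seTr; rewrite ?E0, ?E1; exact Hdt.
    + destruct Hc as (H2 & Er1 & Hdt).
      destruct (LT tu E0) as [Htu _].
      destruct (dec (s = s')) as [Ess|Ness].
      * apply HA; [rewrite Er1; exact Ess|exact H2|].
        unfold spec. rewrite ?E0. destruct (dec (s = s')) as [_|C]; [|contradiction].
        rewrite <- Ess. exact Hdt.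
      * rewrite <- Er1 in Hdt.
        assert (HD0 : delay_step G 0 s (rst r 1)) by (rewrite Er1; apply delay0; exact Hs).
        apply (B_win G Rg s s' _ sec bA sg' se r Hse Hind H2).
        -- unfold bA. rewrite Er1. exact Ness.
        -- exact (hist3_mk G 0 _ _ _ tu HD0 (in_Tall_u _ _ Htu) Hdt).
        -- exact (notUnc G Rg s d _ _ tu Hsafe (cover_mid G s d 0 _ HD0 Hd0) Htu Hdt).
Qed.

Lemma sh_min {L X P} (s s' : state L X P) d e δ δ' :
  sh s δ = sh s' δ' -> s' = sh s d -> sh s (Rmin (d + e) δ) = sh s' (Rmin e δ').
Proof.
  intros H ->. rewrite sh_sh in *. apply (sh_pw s δ (d + δ')); [exact H|].
  intros ->. unfold Rmin. repeat destruct Rle_dec; lra.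
Qed.

Lemma delay_same {L X P Act} (G : PTG L X P Act) s s' a b :
  sh s a = sh s' b -> 0 <= a -> 0 <= b -> is_state G s -> is_state G s' ->
  forall y, delay_step G a s y <-> delay_step G b s' y.
Proof.
  intros E Ha Hb Hs Hs' y. rewrite !delay_iff. rewrite E. tauto.
Qed.

Lemma bA_self {L X P Act} (G : PTG L X P Act) s s' d :
  (exists δ, delay_step G δ s' s) -> s' = sh s d -> 0 <= d -> s' = s.
Proof.
  intros [δ Hδ] Es Hd. apply delay_iff in Hδ. destruct Hδ as (_&_&Hδ0&E).
  rewrite Es in E. rewrite sh_sh in E. rewrite Es.
  rewrite <- (sh_0 s) at 2. apply (sh_pw s (d + δ) 0).
  - rewrite sh_0. symmetry. exact E.
  - intros. lra.
Qed.

Lemma case_WinN {L X P Act} (G : PTG L X P Act) Rg s s' d sg' first :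
  is_state G s -> delay_step G d s s' ->
  (forall s'', cover_delay G s d s'' -> ~ Uncontrollable G (Win G Rg) s'') ->
  winning_strategy_from G Rg sg' s' ->
  (sg' [s'] = Infty L X P Act /\ first = Infty L X P Act) \/
  (exists e, sg' [s'] = Delay L X P Act e /\ first = Delay L X P Act (d + e)) ->
  Win G Rg s.
Proof.
  intros Hs Hd Hsafe Hwin Hfirst.
  pose proof (proj1 Hwin) as Hv.
  pose proof (proj1 (delay_iff _ _ _ _) Hd) as (_&Hs'&Hd0&Es').
  set (bA := fun x1 : state L X P => exists δ, delay_step G δ s' x1).
  set (sec := fun x1 : state L X P => if dec (bA x1) then sg' [s'; x1] else Infty L X P Act).
  destruct (proj1 (valid_eq _ _ _) Hv [] s' (hist_single G s' Hs')) as [VT VD].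
  split; [exact Hs|]. exists (mkSC s s' first sec bA sg' (pk G Rg)). split.
  - apply mkSC_valid.
    + exact Hv.
    + intros w. exact (proj1 (pk_spec G Rg w)).
    + exact Hs'.
    + intros x1 Hb. exact Hb.
    + split.
      * intros t0 E. cbn [app] in E. rewrite mkSC0 in E.
        destruct Hfirst as [[_ Ef]|[e [_ Ef]]]; rewrite Ef in E; discriminate.
      * intros d0 E. cbn [app] in E. rewrite mkSC0 in E.
        destruct Hfirst as [[_ Ef]|[e [Ee Ef]]]; rewrite Ef in E; [discriminate|].
        injection E as <-. destruct (VD e Ee) as [He0 He]. split; [lra|].
        intros y' Hy'. cbn [app]. rewrite mkSC1. unfold sec.
        assert (Hy'e : delay_step G e s' y').
        { apply delay_iff in Hy'. destruct Hy' as (_&Hy'&_&->). apply delay_iff.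
          split; [exact Hs'|split; [exact Hy'|split; [exact He0|]]]. rewrite Es', sh_sh. reflexivity. }
        destruct (dec (bA y')) as [_|C]; [|exfalso; apply C; exists e; exact Hy'e].
        exact (He y' Hy'e).
    + intros x1 Hh. destruct (dec (bA x1)) as [B|B].
      * apply (LV_transfer _ _ _ sg' _ [s']).
        -- intros [|z l].
           ++ cbn [app]. rewrite mkSC1. unfold sec. destruct (dec (bA x1)); [reflexivity|contradiction].
           ++ cbn [app]. unfold mkSC. destruct (dec (s = s)) as [_|C]; [|contradiction].
              destruct (dec (bA x1)); [reflexivity|contradiction].
        -- destruct B as [δ Hδ]. exact (proj1 (valid_eq _ _ _) Hv [s'] x1 (hist2 G δ _ _ Hδ)).
      * apply LV_infty. cbn [app]. rewrite mkSC1. unfold sec.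
        destruct (dec (bA x1)); [contradiction|reflexivity].
  - intros r [se [Hse Hind]].
    pose proof Hind as Hind'. apply induced_eq in Hind'. destruct Hind' as (Hin0 & Hr0 & Hc).
    specialize (Hc 0%nat eq_refl Hin0). unfold clause in Hc.
    rewrite prefix0, prefix1, Hr0 in Hc. unfold global_strategy in Hc.
    rewrite mkSC0, mkSC1 in Hc.
    pose proof (proj1 (valid_eq _ _ _) Hse) as LVs.
    destruct (LVs [] s (hist_single G s Hs)) as [LT LD].
    set (Q := fun δ => exists δ', 0 <= δ' /\ sh s δ = sh s' δ').
    set (spec := match se [s] with
                 | Trans tu => if dec (s = s') then Trans tu else Infty L X P Act
                 | Delay _ _ _ _ δ =>
                     match dec (Q δ) with
                     | left H => Delay L X P Act (proj1_sig (constructive_indefinite_description _ H))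
                     | right _ => Infty L X P Act end
                 | Infty _ _ _ _ => Infty L X P Act end).
    set (se' := senv s' [s] spec se).
    assert (He0 : forall e, sg' [s'] = Delay L X P Act e -> 0 <= e) by
      (intros e Ee; exact (proj1 (VD e Ee))).
    destruct (classic (in_run r 1 /\ ~ bA (rst r 1))) as [[H1 HnB]|HA].
    +
      enough (H : in_run r 2 /\ history G [s; rst r 1; rst r 2] /\ Win G Rg (rst r 2)).
      { destruct H as (H2 & Hh & Hw). exact (B_win G Rg s s' _ sec bA sg' se r Hse Hind H2 HnB Hh Hw). }
      destruct (se [s]) as [δ| |tu] eqn:E0.
      * destruct (LD δ E0) as [Hδ0 Hδ].
        assert (HcD : exists D, (d <= δ -> d <= D) /\ (δ < d -> D = δ) /\
          clause_gen G (Delay L X P Act D) (global_choice (sec (rst r 1)) (se [s; rst r 1]))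
            (in_run r 1) (in_run r 2) s (rst r 1) (rst r 2)).
        { destruct Hfirst as [[_ Ef]|[e [Ee Ef]]]; rewrite Ef in Hc; simpl in Hc.
          - exists δ. split; [lra|split; [lra|exact Hc]].
          - pose proof (He0 e Ee). exists (Rmin (d + e) δ). split; [|split].
            + intros. unfold Rmin; destruct Rle_dec; lra.
            + intros. apply Rmin_right. lra.
            + exact Hc. }
        destruct HcD as (D & HD1 & HD2 & HcD).
        destruct HcD as [Hp Hnp].
        destruct (classic (exists y, delay_step G D s y)) as [Hp'|Hnp']; [|exfalso; exact (Hnp Hnp' H1)].
        destruct (Hp Hp') as (_ & HD & Hm).
        assert (Hlt : δ < d).
        { destruct (Rlt_dec δ d) as [l|n]; [exact l|]. exfalso. apply HnB.
          exact (reachA G s s' d D _ HD ltac:(apply HD1; lra) Es' Hs'). }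
        rewrite (HD2 Hlt) in HD.
        destruct (Hδ _ HD) as [tu Etu]. cbn [app] in Etu. rewrite Etu in Hm.
        assert (Egc : global_choice (sec (rst r 1)) (Trans tu) = Trans tu) by reflexivity.
        rewrite Egc in Hm. destruct Hm as [H2 Hdt].
        destruct (proj1 (LVs [s] (rst r 1) (hist2 G δ _ _ HD)) tu Etu) as [Htu _].
        split; [exact H2|split].
        -- exact (hist3_mk G δ _ _ _ tu HD (in_Tall_u _ _ Htu) Hdt).
        -- exact (notUnc G Rg s d _ _ tu Hsafe (cover_mid G s d δ _ HD ltac:(lra)) Htu Hdt).
      * exfalso. destruct Hfirst as [[_ Ef]|[e [Ee Ef]]]; rewrite Ef in Hc; simpl in Hc;
          [exact (Hc H1)|].
        destruct Hc as [Hp Hnp].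
        destruct (classic (exists y, delay_step G (d + e) s y)) as [Hp'|Hnp']; [|exact (Hnp Hnp' H1)].
        destruct (Hp Hp') as (_ & HD & _). apply HnB.
        pose proof (He0 e Ee).
        exact (reachA G s s' d (d + e) _ HD ltac:(lra) Es' Hs').
      * assert (Egc : global_choice first (Trans tu) = Trans tu) by reflexivity.
        rewrite Egc in Hc. simpl in Hc. destruct Hc as (H2 & Er1 & Hdt).
        destruct (LT tu E0) as [Htu _]. rewrite <- Er1 in Hdt.
        assert (HD0 : delay_step G 0 s (rst r 1)) by (rewrite Er1; apply delay0; exact Hs).
        split; [exact H2|split].
        -- exact (hist3_mk G 0 _ _ _ tu HD0 (in_Tall_u _ _ Htu) Hdt).
        -- exact (notUnc G Rg s d _ _ tu Hsafe (cover_mid G s d 0 _ HD0 Hd0) Htu Hdt).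
    +
      assert (HA' : in_run r 1 -> bA (rst r 1)).
      { intros H1. apply NNPP. intros C. apply HA. split; assumption. }
      clear HA.
      assert (Ese1 : forall x, se' [s'; x] = se [s; x]).
      { intros x. unfold se', senv. destruct (dec (s' = s')) as [_|C]; [reflexivity|contradiction]. }
      assert (Ese : se' [s'] = spec).
      { unfold se', senv. destruct (dec (s' = s')) as [_|C]; [reflexivity|contradiction]. }
      assert (Hc1 : in_run r 1 -> global_choice (sec (rst r 1)) (se [s; rst r 1]) =
                    global_choice (sg' [s'; rst r 1]) (se' [s'; rst r 1])).
      { intros H1. rewrite Ese1. unfold sec. destruct (dec (bA (rst r 1))) as [_|C];
          [reflexivity|exfalso; exact (C (HA' H1))]. }
      apply (head_win G Rg _ sg' se' r s s' d Hind Hd).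
      * apply senv_valid; [exact Hse| |].
        -- intros [|x1 l] Hl Hh; [contradiction|]. simpl.
           apply (hist_head G s'); [exact Hh|exact Hs|].
           destruct Hh as (_&_&Hst). destruct (proj1 (Hst 0%nat s' x1 eq_refl eq_refl) eq_refl) as [δ Hδ].
           exists (d + δ). exact (delay_comp _ _ _ _ _ _ Hd Hδ).
        -- split.
           ++ intros tu E. cbn [app] in E. fold se' in E. rewrite Ese in E. unfold spec in E.
              destruct (se [s]) eqn:E0.
              ** destruct (dec (Q r0)); discriminate.
              ** discriminate.
              ** destruct (dec (s = s')) as [Ess|Ess]; [|discriminate].
                 injection E as <-. rewrite <- Ess. exact (LT t E0).
           ++ intros d0 E. cbn [app] in E. fold se' in E. rewrite Ese in E. unfold spec in E.
              destruct (se [s]) as [δ| |tu] eqn:E0.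
              ** destruct (dec (Q δ)) as [HQ|HQ]; [|discriminate].
                 injection E as <-.
                 destruct (constructive_indefinite_description _ HQ) as [δ' [Hδ'0 Hδ']]. simpl.
                 destruct (LD δ E0) as [Hδ0 Hδ].
                 split; [exact Hδ'0|]. intros y' Hy'. cbn [app]. destruct (dec (s' = s')) as [_|C]; [|contradiction].
                 apply Hδ. apply (delay_same G s s' δ δ' Hδ' Hδ0 Hδ'0 Hs Hs'). exact Hy'.
              ** discriminate.
              ** destruct (dec (s = s')); discriminate.
      * exact Hwin.
      * unfold clause. rewrite !prefix_sh. simpl seq. simpl map. unfold global_strategy.
        change (rst (shrun r 0 s') 1) with (rst r 1).
        change (rst (shrun r 0 s') 2) with (rst r 2).
        rewrite (propositional_extensionality _ _ (in_run_sh r 0 s' 1)).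
        rewrite (propositional_extensionality _ _ (in_run_sh r 0 s' 2)).
        simpl Nat.add. rewrite Ese.
        destruct (se [s]) as [δ| |tu] eqn:E0.
        -- destruct (LD δ E0) as [Hδ0 Hδ].
           assert (Hc' : (sg' [s'] = Infty L X P Act /\ clause_gen G (Delay L X P Act δ) (global_choice (sec (rst r 1)) (se [s; rst r 1]))
                          (in_run r 1) (in_run r 2) s (rst r 1) (rst r 2)) \/
                         exists e, sg' [s'] = Delay L X P Act e /\
                          clause_gen G (Delay L X P Act (Rmin (d + e) δ)) (global_choice (sec (rst r 1)) (se [s; rst r 1]))
                          (in_run r 1) (in_run r 2) s (rst r 1) (rst r 2)).
           { destruct Hfirst as [[Ec Ef]|[e [Ee Ef]]]; rewrite Ef in Hc; simpl in Hc; [left; split; [exact Ec|exact Hc]|].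
             right. exists e. split; [exact Ee|exact Hc]. }
           unfold spec. destruct (dec (Q δ)) as [HQ|HQ].
           ++ destruct (constructive_indefinite_description _ HQ) as [δ' [Hδ'0 Hδ']]. simpl.
              destruct Hc' as [[Ec Hc']|[e [Ee Hc']]].
              ** rewrite Ec. simpl.
                 apply (clause_delay_transfer G δ δ' _ _ _ _ s s' _ _ Hc').
                 --- exact (delay_same G s s' δ δ' Hδ' Hδ0 Hδ'0 Hs Hs').
                 --- exact Hc1.
              ** rewrite Ee. simpl.
                 pose proof (He0 e Ee).
                 apply (clause_delay_transfer G (Rmin (d + e) δ) (Rmin e δ') _ _ _ _ s s' _ _ Hc').
                 --- apply (delay_same G s s'); [exact (sh_min s s' d e δ δ' Hδ' Es')| | |exact Hs|exact Hs'];
                       unfold Rmin; destruct Rle_dec; lra.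
                 --- exact Hc1.
           ++ exfalso.
              assert (Hlt : δ < d).
              { destruct (Rlt_dec δ d) as [l|n]; [exact l|]. exfalso. apply HQ. exists (δ - d).
                split; [lra|]. rewrite Es', sh_sh. f_equal. ring. }
              assert (Hc'' : clause_gen G (Delay L X P Act δ) (global_choice (sec (rst r 1)) (se [s; rst r 1]))
                          (in_run r 1) (in_run r 2) s (rst r 1) (rst r 2)).
              { destruct Hc' as [[_ Hc']|[e [Ee Hc']]]; [exact Hc'|].
                pose proof (He0 e Ee). rewrite Rmin_right in Hc' by lra. exact Hc'. }
              destruct Hc'' as [Hp _].
              assert (Hp' : exists y, delay_step G δ s y).
              { exists (sh s δ). apply delay_iff. split; [exact Hs|split; [|split; [lra|reflexivity]]].
                apply (convex G s d); [exact Hs| rewrite <- Es'; exact Hs' | lra]. }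
              destruct (Hp Hp') as (H1 & HD & _).
              destruct (HA' H1) as [δ'' Hδ''].
              apply HQ. exists δ''. apply delay_iff in Hδ''. apply delay_iff in HD.
              destruct Hδ'' as (_&_&Hδ''0&E1). destruct HD as (_&_&_&E2).
              split; [exact Hδ''0|]. rewrite <- E2. exact E1.
        -- destruct Hfirst as [[Ec Ef]|[e [Ee Ef]]]; rewrite Ef in Hc; simpl in Hc.
           ++ rewrite Ec. simpl. exact Hc.
           ++ rewrite Ee. simpl. pose proof (He0 e Ee).
              apply (clause_delay_transfer G (d + e) e _ _ _ _ s s' _ _ Hc).
              ** apply (delay_same G s s'); [rewrite Es', sh_sh; reflexivity|lra|lra|exact Hs|exact Hs'].
              ** exact Hc1.
        -- assert (Egc : global_choice first (Trans tu) = Trans tu) by reflexivity.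
           rewrite Egc in Hc. simpl in Hc. destruct Hc as (H2 & Er1 & Hdt).
           assert (Ess : s' = s).
           { apply (bA_self G s s' d); [|exact Es'|exact Hd0].
             rewrite <- Er1. apply HA'. apply (in_run_mono r 1 2); [lia|exact H2]. }
           unfold spec. destruct (dec (s = s')) as [_|C]; [|exfalso; apply C; symmetry; exact Ess].
           assert (Egc' : global_choice (sg' [s']) (Trans tu) = Trans tu) by reflexivity.
           rewrite Egc'. simpl. split; [exact H2|split; [rewrite Er1; symmetry; exact Ess|]].
           rewrite Ess. exact Hdt.
      * intros H2 j Hj. destruct j as [|[|j]]; [lia|lia|]. simpl seq. simpl map.
        unfold global_strategy. f_equal.
        -- unfold mkSC. destruct (dec (s = s)) as [_|C]; [|contradiction].
           destruct (dec (bA (rst r 1))) as [_|C]; [reflexivity|].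
           exfalso. apply C. apply HA'. apply (in_run_mono r 1 2); [lia|exact H2].
        -- unfold se', senv. destruct (dec (s' = s')) as [_|C]; [reflexivity|contradiction].
Qed.

Theorem lemmaA1 (L X P Act : Type) (G : PTG L X P Act) (Rg : L -> Prop) :
  forall s : state L X P,
    SafePred G (fun s' => Win G Rg s' \/ WinningMoves G (Win G Rg) s')
               (Uncontrollable G (Win G Rg)) s ->
    Win G Rg s.
Proof.
  intros s [Hs [s' [d [HS1 [Hd Hsafe]]]]].
  destruct HS1 as [Hw | [_ [t [s3 [Ht [Hw3 Hdisc]]]]]].
  - pose proof (proj2 (pk_spec G Rg s') Hw) as Hwin.
    destruct (pk G Rg s' [s']) as [e| |t] eqn:E.
    + apply (case_WinN G Rg s s' d (pk G Rg s') (Delay L X P Act (d + e)) Hs Hd Hsafe Hwin).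
      right. exists e. split; [exact E|reflexivity].
    + apply (case_WinN G Rg s s' d (pk G Rg s') (Infty L X P Act) Hs Hd Hsafe Hwin).
      left. split; [exact E|reflexivity].
    + exact (case_WinT G Rg s s' d (pk G Rg s') t Hs Hd Hsafe Hwin E).
  - exact (case_WM G Rg s s' d t s3 Hs Hd Hsafe Ht Hw3 Hdisc).
Qed.
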